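(* Assume Assumption (S) and the upwind condition $A_{i,0}=0$ for all $i$. Let $\mathbb D^*$ be defined by $(\mathbb D^*v,\omega)_*=\tau\mathcal H^*(v,\omega)$ for all $\omega\in\mathbb V^k$, and let $R_s^*(v)=\sum_{\kappa=0}^s\alpha_\kappa(\mathbb D^* )^\kappa v$ with $\alpha_\kappa$ the coefficients of the polynomial $P_s(z)=\sum_{\kappa=0}^s\alpha_\kappa z^\kappa$ defined by $P_0(z)=1$, $P_{\ell+1}(z)=\sum_{0\le\kappa\le\ell}(c_{\ell\kappa}+d_{\ell\kappa}z)P_\kappa(z)$. Then there exist constants $\{b_\kappa\}$ and $\{b_{\kappa,\kappa_0}\}$ with $b_{\kappa,\kappa_0}=b_{\kappa_0,\kappa}$ such that for every $v\in\mathbb V^k$, $$\|R_s^*(v)\|_*^2=\|v\|_*^2+\sum_{\kappa=1}^sb_\kappa\|(\mathbb D^* )^\kappa v\|_*^2-\tau\sum_{0\le\kappa,\kappa_0<s}b_{\kappa,\kappa_0}\langle[\![(\mathbb D^* )^\kappa v]\!],[\![(\mathbb D^* )^{\kappa_0}v]\!]\rangle.$$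
   Context: Let $\Omega=[a,b]$ be partitioned into finitely many cells $I_i=[x_{i-\frac12},x_{i+\frac12}]$ with sizes $h_i$; indices periodic. $(\cdot,\cdot)$: $L^2(\Omega)$ inner product; $(\cdot,\cdot)_{I_i}$: $L^2(I_i)$ inner product. $\mathbb V^k=\{v\in L^2(\Omega): v|_{I_i}\in\mathbb P^k(I_i)\ \forall i\}$. Each $I_i$ has subdivision points $x_{i-\frac12}=x_{i,0}<x_{i,1}<\dots<x_{i,k}<x_{i,k+1}=x_{i+\frac12}$, control volumes $I_{i,j}=[x_{i,j},x_{i,j+1}]$; $\mathbb V^{k,*}$ = functions constant on each $I_{i,j}$. Quadrature on $I_i$: $Q_i^k(v)=\sum_{j=0}^{k+1}A_{i,j}v(x_{i,j})$ (applied to restrictions to $I_i$), error $R_i^k(v)=\int_{I_i}v\,dx-Q_i^k(v)$, exact on $\mathbb P^{k-1}(I_i)$. $M^*:\mathbb V^k\to\mathbb V^{k,*}$: for $v=\omega|_{I_i}$, $(M^*\omega)|_{I_{i,0}}=v(x_{i-\frac12})+A_{i,0}v'(x_{i-\frac12})$, $(M^*\omega)|_{I_{i,j}}-(M^*\omega)|_{I_{i,j-1}}=A_{i,j}v'(x_{i,j})$, $j=1,\dots,k$. $L_{i,\ell}$: shifted Legendre polynomial of degree $\ell$ on $I_i$, $L_{i,\ell}(x_{i+\frac12})=1$, $(L_{i,\ell},L_{i,m})_{I_i}=\delta_{\ell m}h_i/(2\ell+1)$. Assumption (S): $k\ge1$ and for every $i$, $R_i^k$ vanishes on $\mathbb P^{2k-1}(I_i)$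 and $\frac{h_i}{2k-1}-Q_i^k(L_{i,k+1}L_{i,k-1})>0$; then $(v,\omega)_*:=(v,M^*\omega)$ is an inner product on $\mathbb V^k$, $\|v\|_*=\sqrt{(v,v)_*}$. Jumps $[\![v]\!]_{i+\frac12}=v(x_{i+\frac12}^+)-v(x_{i+\frac12}^-)$, $\langle[\![v]\!],[\![\omega]\!]\rangle=\sum_i[\![v]\!]_{i+\frac12}[\![\omega]\!]_{i+\frac12}$. With $A_{i,0}=0$, for $v,\omega\in\mathbb V^k$: $\mathcal H^*(v,\omega)=\beta\big(\sum_iQ_i^k(v\omega_x)+\sum_iv(x_{i+\frac12}^-)[\![\omega]\!]_{i+\frac12}\big)$, $\beta>0$. $c_{\ell\kappa},d_{\ell\kappa}$ ($0\le\kappa\le\ell\le s-1$, $\sum_\kappa c_{\ell\kappa}=1$) are the coefficients of an explicit $s$-stage Runge–Kutta method, $\tau>0$ the time step. *)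

(* Defs.v *)
From mathcomp Require Import all_boot all_order all_algebra.
Set Implicit Arguments. Unset Strict Implicit. Unset Printing Implicit Defensive.
Import Order.TTheory GRing.Theory Num.Theory.
Local Open Scope ring_scope.

Definition prim (R : fieldType) (p : {poly R}) : {poly R} :=
  \poly_(i < (size p).+1) (if i is j.+1 then p`_j / j.+1%:R else 0).
Definition pint (R : fieldType) (p : {poly R}) (a b : R) : R :=
  (prim p).[b] - (prim p).[a].

Fixpoint leg_pair (R : fieldType) (n : nat) : {poly R} * {poly R} :=
  match n with
  | 0 => (1, 'X)
  | m.+1 => let pq := leg_pair R m in
      (pq.2, (m.+2%:R)^-1 *: ((m.*2 + 3)%:R *: ('X * pq.2) - m.+1%:R *: pq.1))
  end.
Definition legendre (R : fieldType) (n : nat) : {poly R} := (leg_pair R n).1.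

(* ---------- the mesh ----------
   N cells I_i = [x i, x (i+1)], i : 'I_N, indices periodic;
   xs i j = x_{i,j} (j = 0..k+1), A i j = A_{i,j}.
   A function of V^k is a family v : 'I_N -> {poly R} of polynomials of
   size <= k+1 (degree <= k), v i being the restriction of v to I_i. *)

Definition inVk (R : nzRingType) (N k : nat) (v : 'I_N -> {poly R}) : Prop :=
  forall i, (size (v i) <= k.+1)%N.

Definition hcell (R : nzRingType) (N : nat) (x : nat -> R) (i : 'I_N) : R :=
  x i.+1 - x i.

Definition shleg (R : fieldType) (N : nat) (x : nat -> R) (i : 'I_N) (l : nat)
  : {poly R} :=
  legendre R l \Po ((2 / hcell x i) *: 'X - ((x i + x i.+1) / hcell x i)%:P).

Definition quad (R : nzRingType) (N k : nat) (xs A : 'I_N -> nat -> R) (i : 'I_N)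
  (p : {poly R}) : R :=
  \sum_(j < k.+2) A i j * p.[xs i j].
Definition quad_err (R : fieldType) (N k : nat) (x : nat -> R)
  (xs A : 'I_N -> nat -> R) (i : 'I_N) (p : {poly R}) : R :=
  pint p (x i) (x i.+1) - quad k xs A i p.

Definition assumptionS (R : realFieldType) (N k : nat) (x : nat -> R)
  (xs A : 'I_N -> nat -> R) : Prop :=
  (1 <= k)%N /\
  forall i : 'I_N,
    (forall p : {poly R}, (size p <= k.*2)%N -> quad_err k x xs A i p = 0) /\
    hcell x i / (k.*2 - 1)%:R - quad k xs A i (shleg x i k.+1 * shleg x i k.-1) > 0.

(* value of M^star w on the control volume I_{i,j} = [x_{i,j}, x_{i,j+1}], j = 0..k:
   w_i(x_{i-1/2}) + sum_{l=0}^{j} A_{i,l} w_i'(x_{i,l})  (unfolded recursion) *)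
Definition Mstar (R : nzRingType) (N : nat) (xs A : 'I_N -> nat -> R)
  (w : 'I_N -> {poly R}) (i : 'I_N) (j : nat) : R :=
  (w i).[xs i 0] + \sum_(l < j.+1) A i l * (w i)^`().[xs i l].

(* (v,w)_star := (v, M^star w) *)
Definition ipstar (R : fieldType) (N k : nat) (xs A : 'I_N -> nat -> R)
  (v w : 'I_N -> {poly R}) : R :=
  \sum_(i < N) \sum_(j < k.+1) Mstar xs A w i j * pint (v i) (xs i j) (xs i j.+1).

Definition jump (R : nzRingType) (N : nat) (x : nat -> R) (v : 'I_N -> {poly R})
  (i : 'I_N) : R :=
  (v (ordS i)).[x (ordS i)] - (v i).[x i.+1].

Definition jumpip (R : nzRingType) (N : nat) (x : nat -> R) (v w : 'I_N -> {poly R}) : R :=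
  \sum_(i < N) jump x v i * jump x w i.

(* H^star(v, w) (upwind case A_{i,0} = 0) *)
Definition Hstar (R : nzRingType) (N k : nat) (x : nat -> R) (xs A : 'I_N -> nat -> R)
  (beta : R) (v w : 'I_N -> {poly R}) : R :=
  beta * (\sum_(i < N) quad k xs A i (v i * (w i)^`())
          + \sum_(i < N) (v i).[x i.+1] * jump x w i).

Fixpoint rk_polys (R : nzRingType) (c d : nat -> nat -> R) (n : nat) : seq {poly R} :=
  match n with
  | 0 => [:: 1]
  | m.+1 => let ps := rk_polys c d m in
      rcons ps (\sum_(kap < m.+1) ((c m kap)%:P + d m kap *: 'X) * nth 0 ps kap)
  end.
Definition rk_poly (R : nzRingType) (c d : nat -> nat -> R) (n : nat) : {poly R} :=
  nth 0 (rk_polys c d n) n.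

Definition Rstar (R : nzRingType) (N : nat) (c d : nat -> nat -> R) (s : nat)
  (D : ('I_N -> {poly R}) -> ('I_N -> {poly R})) (v : 'I_N -> {poly R})
  : 'I_N -> {poly R} :=
  fun i => \sum_(kap < s.+1) (rk_poly c d s)`_kap *: (iter kap D v) i.

(* Main.v *)
Require Import Defs.
From mathcomp Require Import all_boot all_order all_algebra.
From mathcomp Require Import ring lra zify.
Import Order.TTheory GRing.Theory Num.Theory.
Local Open Scope ring_scope.
Set Implicit Arguments. Unset Strict Implicit. Unset Printing Implicit Defensive.

Section Poly.
Variable R : realFieldType.
Implicit Types p q : {poly R}.

Lemma coef_prim p j : (prim p)`_j = if j is j'.+1 then p`_j' / j'.+1%:R else 0.
Proof.
rewrite /prim coef_poly; case: j => [|j] //=; case: ifP => // /negbT.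
rewrite ltnS -leqNgt => H; by rewrite nth_default // mul0r.
Qed.

Lemma prim_lin a p q : prim (a *: p + q) = a *: prim p + prim q.
Proof.
apply/polyP => j; rewrite coefD coefZ !coef_prim; case: j => [|j].
  by rewrite mulr0 addr0.
by rewrite coefD coefZ mulrDl mulrA.
Qed.

Lemma prim0 : prim (0 : {poly R}) = 0.
Proof. by apply/polyP => j; rewrite coef_prim coef0; case: j => [|j] //=; rewrite coef0 mul0r. Qed.

Lemma deriv_prim p : (prim p)^`() = p.
Proof.
apply/polyP => j; rewrite coef_deriv coef_prim /= -(mulr_natr (p`_j / _)) divfK //.
by rewrite pnatr_eq0.
Qed.

Lemma prim_deriv q : prim (q^`()) = q - (q`_0)%:P.
Proof.
apply/polyP => j; rewrite coef_prim coefB coefC; case: j => [|j] /=.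
  by rewrite subrr.
by rewrite coef_deriv -(mulr_natr (q`_j.+1)) mulfK ?subr0 // pnatr_eq0.
Qed.

Lemma pint_deriv q a b : pint (q^`()) a b = q.[b] - q.[a].
Proof. rewrite /pint prim_deriv !hornerE; ring. Qed.

Lemma pint_lin c p q a b : pint (c *: p + q) a b = c * pint p a b + pint q a b.
Proof. rewrite /pint prim_lin !hornerD !hornerZ; ring. Qed.

Lemma pint0 (a b : R) : pint (0 : {poly R}) a b = 0.
Proof. by rewrite /pint prim0 !horner0 subrr. Qed.

Lemma pint_sum n (al : nat -> R) (F : nat -> {poly R}) a b :
  pint (\sum_(kap < n) al kap *: F kap) a b = \sum_(kap < n) al kap * pint (F kap) a b.
Proof.
elim: n => [|n IH]; first by rewrite !big_ord0 pint0.
by rewrite !big_ord_recr /= addrC pint_lin IH addrC.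
Qed.

Lemma size_deriv_le p : (size p^`() <= (size p).-1)%N.
Proof.
have [->|nz] := eqVneq p 0; first by rewrite deriv0 size_poly0.
have := lt_size_deriv nz; case: (size p) => //.
Qed.

Lemma size_prim_le p : (size (prim p) <= (size p).+1)%N.
Proof. exact: size_poly. Qed.

Lemma coefM_top p q m n : (size p <= m.+1)%N -> (size q <= n.+1)%N ->
  (p * q)`_(m + n) = p`_m * q`_n.
Proof.
move=> Hp Hq; rewrite coefM.
have Hm : (m < (m + n).+1)%N by lia.
rewrite (bigD1 (Ordinal Hm)) //= addKn big1 ?addr0 // => j /eqP Hj.
have Hj' : (nat_of_ord j <> m) by move=> E; apply: Hj; apply: val_inj.
case: (ltnP m j) => H.
  by rewrite (nth_default _ (_ : size p <= j)%N) ?mul0r //; lia.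
have := ltn_ord j => Hl.
by rewrite (nth_default _ (_ : size q <= m + n - j)%N) ?mulr0 //; lia.
Qed.

Lemma size_le_top p n : (size p <= n.+1)%N -> p`_n = 0 -> (size p <= n)%N.
Proof.
rewrite leq_eqVlt => /orP [/eqP Hs | //] Hc.
have : lead_coef p = 0 by rewrite lead_coefE Hs.
by move/eqP; rewrite lead_coef_eq0 => /eqP ->; rewrite size_poly0.
Qed.

Lemma size_derivM_le p q (k : nat) : (size p <= k.+1)%N -> (size q <= k.+1)%N ->
  (size (p * q)^`() <= k.*2)%N.
Proof.
move=> Hp Hq; apply: leq_trans (size_deriv_le _) _.
have := size_polyMleq p q; lia.
Qed.


Lemma abel (n : nat) (w0 : R) (a P : nat -> R) :
 \sum_(j < n.+1) (w0 + \sum_(l < j.+1) a l) * (P j.+1 - P j) =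
 (w0 + \sum_(l < n.+1) a l) * P n.+1 - w0 * P 0%N - \sum_(j < n.+1) a j * P j.
Proof.
elim: n => [|n IH].
  rewrite !big_ord1; ring.
rewrite (big_ord_recr n.+1) /= IH !(big_ord_recr n.+1) /=; ring.
Qed.

Lemma quadB (N k : nat) (xs A : 'I_N -> nat -> R) i p q :
  quad k xs A i (p - q) = quad k xs A i p - quad k xs A i q.
Proof. by rewrite /quad -sumrB; apply: eq_bigr => j _; rewrite hornerD hornerN; ring. Qed.

Lemma quadD (N k : nat) (xs A : 'I_N -> nat -> R) i p q :
  quad k xs A i (p + q) = quad k xs A i p + quad k xs A i q.
Proof. by rewrite /quad -big_split; apply: eq_bigr => j _; rewrite hornerD mulrDr. Qed.

Definition cellS (N k : nat) (xs A : 'I_N -> nat -> R) i (v w : {poly R}) :=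
  \sum_(j < k.+1) ((w.[xs i 0%N] + \sum_(l < j.+1) A i l * w^`().[xs i l])
     * pint v (xs i j) (xs i j.+1)).

Lemma cell (N k : nat) (xs A : 'I_N -> nat -> R) i (v w : {poly R}) :
  (forall p, (size p <= k.*2)%N -> pint p (xs i 0%N) (xs i k.+1) = quad k xs A i p) ->
  (size w <= k.+1)%N ->
  cellS k xs A i v w = w.[xs i k.+1] * (prim v).[xs i k.+1]
     - w.[xs i 0%N] * (prim v).[xs i 0%N] - quad k xs A i (w^`() * prim v).
Proof.
move=> Hex Hw.
have Hq : quad k xs A i w^`() = w.[xs i k.+1] - w.[xs i 0%N].
  rewrite -Hex ?pint_deriv //; apply: leq_trans (size_deriv_le _) _; lia.
have := abel k w.[xs i 0%N] (fun l => A i l * w^`().[xs i l]) (fun j => (prim v).[xs i j]).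
rewrite /= /cellS /pint => ->.
move: Hq; rewrite /quad !(big_ord_recr k.+1) /= => Hq.
have E : \sum_(j < k.+1) A i j * (w^`() * prim v).[xs i j] = \sum_(j < k.+1) A i j * w^`().[xs i j] * (prim v).[xs i j] by apply: eq_bigr => j _; rewrite hornerM mulrA.
rewrite E.
have Hq2 : \sum_(l < k.+1) A i l * w^`().[xs i l] = w.[xs i k.+1] - w.[xs i 0%N] - A i k.+1 * w^`().[xs i k.+1] by rewrite -Hq; ring.
rewrite Hq2 hornerM; ring.
Qed.

Lemma cell_sym (N k : nat) (xs A : 'I_N -> nat -> R) i (v w : {poly R}) :
  (forall p, (size p <= k.*2)%N -> pint p (xs i 0%N) (xs i k.+1) = quad k xs A i p) ->
  (size v <= k.+1)%N -> (size w <= k.+1)%N ->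
  cellS k xs A i v w = cellS k xs A i w v.
Proof.
move=> Hex Hv Hw; rewrite !cell //.
set r := w * prim v - v * prim w.
have Hr : r^`() = w^`() * prim v - v^`() * prim w.
  by rewrite /r derivB !derivM !deriv_prim; ring.
have Hs : (size r <= k.*2.+1)%N.
  apply: size_le_top.
    apply: leq_trans (size_polyD _ _) _; rewrite size_polyN geq_max.
    apply/andP; split; apply: leq_trans (size_polyMleq _ _) _;
      rewrite -subn1 leq_subLR.
      apply: leq_trans (leq_add Hw (_ : size (prim v) <= k.+2)%N) _;
        [exact: leq_trans (size_prim_le v) _ | lia].
    apply: leq_trans (leq_add Hv (_ : size (prim w) <= k.+2)%N) _;
      [exact: leq_trans (size_prim_le w) _ | lia].
  have -> : k.*2.+1 = (k + k.+1)%N by lia.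
  have Hpv : (size (prim v) <= k.+2)%N by exact: leq_trans (size_prim_le v) _.
  have Hpw : (size (prim w) <= k.+2)%N by exact: leq_trans (size_prim_le w) _.
  rewrite coefB (coefM_top Hw Hpv) (coefM_top Hv Hpw) !coef_prim; ring.
have Hs' : (size r^`() <= k.*2)%N by apply: leq_trans (size_deriv_le _) _; lia.
have := Hex _ Hs'; rewrite pint_deriv Hr quadB /r !hornerE.
lra.
Qed.


Lemma exact_of_S (N k : nat) (x : nat -> R) (xs A : 'I_N -> nat -> R) i :
  xs i 0%N = x i -> xs i k.+1 = x i.+1 -> assumptionS k x xs A ->
  forall p, (size p <= k.*2)%N -> pint p (xs i 0%N) (xs i k.+1) = quad k xs A i p.
Proof.
move=> H0 H1 [_ HS] p Hp; have [HE _] := HS i; have := HE p Hp.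
by rewrite /quad_err H0 H1 => /eqP; rewrite subr_eq0 => /eqP.
Qed.

Lemma ipstar_sym (N k : nat) (x : nat -> R) (xs A : 'I_N -> nat -> R) v w :
  (forall i : 'I_N, xs i 0%N = x i /\ xs i k.+1 = x i.+1) -> assumptionS k x xs A ->
  inVk k v -> inVk k w -> ipstar k xs A v w = ipstar k xs A w v.
Proof.
move=> Hxs HS Hv Hw; rewrite /ipstar; apply: eq_bigr => i _.
have [H0 H1] := Hxs i.
exact: (cell_sym (exact_of_S H0 H1 HS) (Hv i) (Hw i)).
Qed.

Lemma Hsym (N k : nat) (x : nat -> R) (xs A : 'I_N -> nat -> R) beta u w :
  (forall i : 'I_N, xs i 0%N = x i /\ xs i k.+1 = x i.+1) -> assumptionS k x xs A ->
  inVk k u -> inVk k w ->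
  Hstar k x xs A beta u w + Hstar k x xs A beta w u = - (beta * jumpip x u w).
Proof.
move=> Hxs HS Hu Hw; rewrite /Hstar -mulrDr -mulrN; congr (beta * _).
have Hc : forall i : 'I_N, quad k xs A i (u i * (w i)^`()) + quad k xs A i (w i * (u i)^`())
   = (u i).[x i.+1] * (w i).[x i.+1] - (u i).[x i] * (w i).[x i].
  move=> i; have [H0 H1] := Hxs i.
  have -> : quad k xs A i (u i * (w i)^`()) + quad k xs A i (w i * (u i)^`())
     = quad k xs A i ((u i * w i)^`()) by rewrite -quadD derivM; congr quad; ring.
  rewrite -(exact_of_S H0 H1 HS) ?size_derivM_le // pint_deriv H0 H1 !hornerM //.
rewrite addrACA -!big_split /=.
rewrite (eq_bigr (fun i => - (jump x u i * jump x w i) +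
   ((u (ordS i)).[x (ordS i)] * (w (ordS i)).[x (ordS i)] - (u i).[x i] * (w i).[x i]))).
  have Hre : \sum_(i < N) (u (ordS i)).[x (ordS i)] * (w (ordS i)).[x (ordS i)]
     = \sum_(i < N) (u i).[x i] * (w i).[x i] by rewrite [RHS](reindex_inj (@ordS_inj N)).
  rewrite big_split sumrB /= Hre.
  by rewrite subrr addr0 sumrN.
move=> i _; rewrite Hc /jump; ring.
Qed.


Lemma deriv_sumZ n (a : nat -> R) (p : nat -> {poly R}) :
  (\sum_(kap < n) a kap *: p kap)^`() = \sum_(kap < n) a kap *: (p kap)^`().
Proof.
elim: n => [|n IH]; first by rewrite !big_ord0 deriv0.
by rewrite !big_ord_recr /= derivD derivZ IH.
Qed.

Lemma hornerSZ n (a : nat -> R) (p : nat -> {poly R}) t :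
  (\sum_(kap < n) a kap *: p kap).[t] = \sum_(kap < n) a kap * (p kap).[t].
Proof. by rewrite horner_sum; apply: eq_bigr => j _; rewrite hornerZ. Qed.

Lemma Mstar_sum (N : nat) (xs A : 'I_N -> nat -> R) n (a : nat -> R)
  (F : nat -> 'I_N -> {poly R}) i j :
  Mstar xs A (fun i => \sum_(kap < n) a kap *: F kap i) i j
  = \sum_(kap < n) a kap * Mstar xs A (F kap) i j.
Proof.
rewrite /Mstar /= (hornerSZ n a (fun kap => F kap i)).
have E : \sum_(l < j.+1) A i l * (\sum_(kap < n) a kap *: F kap i)^`().[xs i l]
   = \sum_(kap < n) a kap * \sum_(l < j.+1) A i l * (F kap i)^`().[xs i l].
  under eq_bigr => l _ do rewrite (deriv_sumZ n a (fun kap => F kap i)) (hornerSZ n a (fun kap => (F kap i)^`())) mulr_sumr.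
  rewrite exchange_big /=; apply: eq_bigr => kap _; rewrite mulr_sumr.
  by apply: eq_bigr => l _; rewrite mulrCA.
rewrite E -big_split /=; apply: eq_bigr => kap _; by rewrite mulrDr.
Qed.

Lemma ipstar_suml (N k : nat) (xs A : 'I_N -> nat -> R) n (a : nat -> R)
  (F : nat -> 'I_N -> {poly R}) w :
  ipstar k xs A (fun i => \sum_(kap < n) a kap *: F kap i) w
  = \sum_(kap < n) a kap * ipstar k xs A (F kap) w.
Proof.
rewrite /ipstar.
under eq_bigr => i _ do under eq_bigr => j _ do rewrite (pint_sum n a (fun kap => F kap i)) mulr_sumr.
under eq_bigr do rewrite exchange_big.
rewrite exchange_big /=; apply: eq_bigr => kap _; rewrite mulr_sumr.
apply: eq_bigr => i _; rewrite mulr_sumr; apply: eq_bigr => j _.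
by rewrite mulrCA.
Qed.

Lemma ipstar_sumr (N k : nat) (xs A : 'I_N -> nat -> R) n (a : nat -> R)
  (F : nat -> 'I_N -> {poly R}) v :
  ipstar k xs A v (fun i => \sum_(kap < n) a kap *: F kap i)
  = \sum_(kap < n) a kap * ipstar k xs A v (F kap).
Proof.
rewrite /ipstar.
under eq_bigr do under eq_bigr do rewrite Mstar_sum mulr_suml.
under eq_bigr do rewrite exchange_big.
rewrite exchange_big /=; apply: eq_bigr => kap _; rewrite mulr_sumr.
apply: eq_bigr => i _; rewrite mulr_sumr; apply: eq_bigr => j _.
by rewrite mulrA.
Qed.

Lemma jumpip_sym (N : nat) (x : nat -> R) (u w : 'I_N -> {poly R}) :
  jumpip x u w = jumpip x w u.
Proof. by apply: eq_bigr => i _; rewrite mulrC. Qed.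

End Poly.
Section Comb.
Variable R : realFieldType.

Lemma size_rk (c d : nat -> nat -> R) n : size (rk_polys c d n) = n.+1.
Proof. by elim: n => [|n IH] //=; rewrite size_rcons IH. Qed.

Lemma rk_nth (c d : nat -> nat -> R) n j : (j <= n)%N -> nth 0 (rk_polys c d n) j = rk_poly c d j.
Proof.
elim: n j => [|n IH] j Hj.
  by have -> : j = 0%N by lia.
rewrite /= nth_rcons size_rk; case: (ltnP j n.+1) => H; first by rewrite IH.
have -> : j = n.+1 by lia.
by rewrite /rk_poly /= nth_rcons size_rk ltnn eqxx.
Qed.

Lemma rk_succ (c d : nat -> nat -> R) n : rk_poly c d n.+1 =
  \sum_(kap < n.+1) ((c n kap)%:P + d n kap *: 'X) * rk_poly c d kap.
Proof.
rewrite /rk_poly /= nth_rcons size_rk ltnn eqxx; apply: eq_bigr => kap _.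
by rewrite rk_nth // -ltnS.
Qed.

Lemma rk0 (c d : nat -> nat -> R) s n : (n <= s)%N ->
  (forall l : nat, (l < s)%N -> \sum_(kap < l.+1) c l kap = 1) ->
  (rk_poly c d n)`_0 = 1.
Proof.
move=> Hn Hc; elim/ltn_ind: n Hn => n IH Hn.
case: n IH Hn => [|n] IH Hn; first by rewrite /rk_poly /= coef1.
rewrite rk_succ coef_sum -(Hc n) //; apply: eq_bigr => kap _.
have Hk := ltn_ord kap.
rewrite coef0M coefD coefC coefZ coefX IH /=; first by rewrite mulr0 addr0 mulr1.
  by [].
lia.
Qed.

Fixpoint Ecoef (d : nat) : R :=
  match d with O => 1 | S O => 0 | S (S d') => - Ecoef d' end.

Fixpoint Gcoef (d i p q : nat) : R :=
  match d with
  | O => 0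
  | S O => if (p == i) && (q == i) then 2^-1 else 0
  | S (S d') => - Gcoef d' i.+1 p q + (if (p == i) && (q == (i + d'.+1)%N) then 1 else 0)
  end.

Lemma delta1 (n m : nat) (F : nat -> R) : (m < n)%N ->
  \sum_(kap < n) (if m == kap then F kap else 0) = F m.
Proof.
move=> H; rewrite (bigD1 (Ordinal H)) //= eqxx big1 ?addr0 // => kap Hk.
case: eqP => // E; exfalso; move/eqP: Hk; apply; apply: val_inj; by rewrite /= E.
Qed.

Lemma delta2 (s a b : nat) (X : R) (J : nat -> nat -> R) : (a < s)%N -> (b < s)%N ->
  \sum_(p < s) \sum_(q < s) (if (p == a :> nat) && (q == b :> nat) then X else 0) * J p q = X * J a b.
Proof.
move=> Ha Hb.
rewrite (eq_bigr (fun p : 'I_s => if a == p then X * J p b else 0)).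
  by rewrite (delta1 (fun p => X * J p b)).
move=> p _.
rewrite (eq_bigr (fun q : 'I_s => if b == q then (if a == p then X * J p q else 0) else 0)).
  by rewrite (delta1 (fun q => if a == p then X * J p q else 0)).
move=> q _; rewrite [a == _]eq_sym [b == _]eq_sym.
by case: (p == a :> nat); case: (q == b :> nat); rewrite /= ?mul0r.
Qed.

Section Rep.
Variables (f J : nat -> nat -> R) (gam : R) (s : nat).
Hypothesis fsym : forall a b, f a b = f b a.
Hypothesis F2 : forall a b, f a.+1 b + f a b.+1 = - (gam * J a b).

Lemma rep d i : (i + d <= s)%N ->
  f i (i + d) = Ecoef d * f (i + d./2) (i + d./2)
     - gam * \sum_(p < s) \sum_(q < s) Gcoef d i p q * J p q.
Proof.
suff H : forall d, (forall i, (i + d <= s)%N -> f i (i + d) = Ecoef d * f (i + d./2) (i + d./2)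
     - gam * \sum_(p < s) \sum_(q < s) Gcoef d i p q * J p q) /\
   (forall i, (i + d.+1 <= s)%N -> f i (i + d.+1) = Ecoef d.+1 * f (i + d.+1./2) (i + d.+1./2)
     - gam * \sum_(p < s) \sum_(q < s) Gcoef d.+1 i p q * J p q).
  by case: (H d) => H1 _; apply: H1.
clear d i; elim => [|d [IH1 IH2]]; split => // j Hj.
- rewrite addn0 /= mul1r big1 ?mulr0 ?subr0 // => p _.
  by rewrite big1 // => q _; rewrite mul0r.
- rewrite /= delta2; try lia.
  have := F2 j j; rewrite fsym addn0 addn1 mul0r sub0r mulrCA.
  move=> h; lra.
- have E0 : f j.+1 (j + d.+1) + f j (j + d.+2) = - (gam * J j (j + d.+1)) by rewrite (addnS j d.+1) F2.
  have E1 := IH1 j.+1 (_ : (j.+1 + d <= s)%N); rewrite !addSnnS in E1.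
  rewrite E1 in E0; last by lia.
  move: E0; rewrite /=.
  have -> : \sum_(p < s) \sum_(q < s) (- Gcoef d j.+1 p q +
      (if (p == j :> nat) && (q == (j + d.+1)%N :> nat) then 1 else 0)) * J p q
    = - (\sum_(p < s) \sum_(q < s) Gcoef d j.+1 p q * J p q) + 1 * J j (j + d.+1).
    rewrite -(@delta2 s); try lia.
    rewrite -sumrN -big_split; apply: eq_bigr => p _.
    rewrite -sumrN -big_split; apply: eq_bigr => q _.
    by rewrite mulrDl mulNr.
  move=> h; lra.
Qed.
End Rep.


Definition dd (i j : nat) : nat := (maxn i j - minn i j)%N.
Definition mid (i j : nat) : nat := (minn i j + (dd i j)./2)%N.
Definition bcoef (s : nat) (al : nat -> R) (kap : nat) : R :=
  \sum_(i < s.+1) \sum_(j < s.+1)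
     al i * al j * Ecoef (dd i j) * (if mid i j == kap then 1 else 0).
Definition braw (s : nat) (al : nat -> R) (p q : nat) : R :=
  \sum_(i < s.+1) \sum_(j < s.+1) al i * al j * Gcoef (dd i j) (minn i j) p q.
Definition bbcoef (s : nat) (al : nat -> R) (p q : nat) : R :=
  (braw s al p q + braw s al q p) / 2.

Lemma mid_le i j : (mid i j <= maxn i j)%N.
Proof.
have h : ((dd i j)./2 <= dd i j)%N by rewrite leq_half_double; lia.
move: h; rewrite /mid /dd; lia.
Qed.

Lemma bcoef0 s (al : nat -> R) : al 0%N = 1 -> bcoef s al 0 = 1.
Proof.
move=> a0; rewrite /bcoef (eq_bigr (fun i : 'I_s.+1 => if 0%N == i then 1 else 0)).
  by rewrite (delta1 (fun _ => 1)).
move=> i _.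
rewrite (eq_bigr (fun j : 'I_s.+1 => if 0%N == j then (if 0%N == i then 1 else 0) else 0)).
  by rewrite (delta1 (fun _ => if 0%N == i then 1 else 0)).
move=> j _.
have [Hij|Hij] := boolP ((i == 0 :> nat) && (j == 0 :> nat)).
  move/andP: Hij => [/eqP -> /eqP ->].
  by rewrite /mid /dd /= a0 !mulr1.
rewrite [0%N == j]eq_sym [0%N == i]eq_sym.
have -> : (if (j == 0 :> nat) then (if (i == 0 :> nat) then 1 else 0) else 0) = 0 :> R.
  by case/nandP: Hij => /negbTE H; rewrite H ?if_same.
case Hm: (mid i j == 0)%N; last by rewrite mulr0.
move: Hm; rewrite /mid; case E: (dd i j) => [|[|e]] /= Hm.
- move: E; rewrite /dd => E; exfalso; move: Hij; lia.
- by rewrite mulr0 mul0r.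
- by move: Hm; rewrite addnS.
Qed.

Lemma exch4 (n m : nat) (F : nat -> nat -> nat -> nat -> R) :
  \sum_(i < n) \sum_(j < n) \sum_(p < m) \sum_(q < m) F i j p q =
  \sum_(p < m) \sum_(q < m) \sum_(i < n) \sum_(j < n) F i j p q.
Proof.
under eq_bigr => i _ do rewrite exchange_big.
rewrite exchange_big; apply: eq_bigr => p _.
under eq_bigr => i _ do rewrite exchange_big.
by rewrite exchange_big.
Qed.

Lemma energy (s : nat) (al : nat -> R) (gam : R) (f J : nat -> nat -> R) :
  al 0%N = 1 -> (forall a b, f a b = f b a) -> (forall a b, J a b = J b a) ->
  (forall a b, f a.+1 b + f a b.+1 = - (gam * J a b)) ->
  \sum_(i < s.+1) \sum_(j < s.+1) al i * al j * f i j =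
  f 0%N 0%N + \sum_(1 <= kap < s.+1) bcoef s al kap * f kap kap
  - gam * \sum_(p < s) \sum_(q < s) bbcoef s al p q * J p q.
Proof.
move=> a0 fs Js F2.
have Hf : forall i j, (i <= s)%N -> (j <= s)%N -> f i j = Ecoef (dd i j) * f (mid i j) (mid i j)
   - gam * \sum_(p < s) \sum_(q < s) Gcoef (dd i j) (minn i j) p q * J p q.
  move=> i j Hi Hj.
  have -> : f i j = f (minn i j) (minn i j + dd i j).
    rewrite /dd; case: (leqP i j) => H.
      by congr (f _ _); lia.
    by rewrite fs; congr (f _ _); lia.
  rewrite /mid; apply: (rep fs F2); rewrite /dd; lia.
have -> : \sum_(i < s.+1) \sum_(j < s.+1) al i * al j * f i j =
   \sum_(i < s.+1) \sum_(j < s.+1) al i * al j * Ecoef (dd i j) * f (mid i j) (mid i j)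
   - gam * \sum_(i < s.+1) \sum_(j < s.+1) \sum_(p < s) \sum_(q < s)
        al i * al j * (Gcoef (dd i j) (minn i j) p q * J p q).
  rewrite mulr_sumr -sumrB; apply: eq_bigr => i _; rewrite mulr_sumr -sumrB.
  apply: eq_bigr => j _; rewrite Hf; last by have := ltn_ord j; lia.
    have -> : \sum_(p < s) \sum_(q < s) al i * al j * (Gcoef (dd i j) (minn i j) p q * J p q)
       = al i * al j * \sum_(p < s) \sum_(q < s) Gcoef (dd i j) (minn i j) p q * J p q.
      rewrite mulr_sumr; apply: eq_bigr => p _; by rewrite mulr_sumr.
    ring.
  by have := ltn_ord i; lia.
have HA : \sum_(i < s.+1) \sum_(j < s.+1) al i * al j * Ecoef (dd i j) * f (mid i j) (mid i j)
   = \sum_(kap < s.+1) bcoef s al kap * f kap kap.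
  symmetry.
  rewrite (eq_bigr (fun kap : 'I_s.+1 => \sum_(i < s.+1) \sum_(j < s.+1)
     (if mid i j == kap then al i * al j * Ecoef (dd i j) * f kap kap else 0))); last first.
    move=> kap _; rewrite mulr_suml; apply: eq_bigr => i _; rewrite mulr_suml.
    by apply: eq_bigr => j _; case: eqP => _; rewrite ?mulr1 ?mulr0 ?mul0r.
  rewrite exchange_big; apply: eq_bigr => i _; rewrite exchange_big; apply: eq_bigr => j _.
  rewrite (delta1 (fun kap => al i * al j * Ecoef (dd i j) * f kap kap)) //.
  have := mid_le i j; have := ltn_ord i; have := ltn_ord j; lia.
have HB : \sum_(i < s.+1) \sum_(j < s.+1) \sum_(p < s) \sum_(q < s)
        al i * al j * (Gcoef (dd i j) (minn i j) p q * J p q)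
    = \sum_(p < s) \sum_(q < s) bbcoef s al p q * J p q.
  rewrite (exch4 s.+1 s (fun i j p q => al i * al j * (Gcoef (dd i j) (minn i j) p q * J p q))).
  have E1 : \sum_(p < s) \sum_(q < s) bbcoef s al p q * J p q =
     2^-1 * (\sum_(p < s) \sum_(q < s) braw s al p q * J p q
             + \sum_(p < s) \sum_(q < s) braw s al q p * J p q).
    rewrite -big_split mulr_sumr; apply: eq_bigr => p _.
    rewrite -big_split mulr_sumr; apply: eq_bigr => q _.
    rewrite /bbcoef /=; ring.
  have E2 : \sum_(p < s) \sum_(q < s) braw s al q p * J p q =
            \sum_(p < s) \sum_(q < s) braw s al p q * J p q.
    rewrite exchange_big; apply: eq_bigr => p _; apply: eq_bigr => q _; by rewrite Js.
  rewrite E1 E2.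
  have -> : \sum_(p < s) \sum_(q < s) braw s al p q * J p q =
     \sum_(p < s) \sum_(q < s) \sum_(i < s.+1) \sum_(j < s.+1)
        al i * al j * (Gcoef (dd i j) (minn i j) p q * J p q).
    apply: eq_bigr => p _; apply: eq_bigr => q _; rewrite /braw mulr_suml.
    apply: eq_bigr => i _; rewrite mulr_suml; apply: eq_bigr => j _; by rewrite mulrA.
  set X := \sum_(p < s) _; lra.
rewrite HA HB big_ord_recl /= bcoef0 // mul1r big_add1 /= big_mkord.
by [].
Qed.

End Comb.

Theorem proposition4p9
  (R : realFieldType) (N k : nat) (x : nat -> R) (xs A : 'I_N -> nat -> R)
  (beta tau : R) (s : nat) (c d : nat -> nat -> R)
  (D : ('I_N -> {poly R}) -> ('I_N -> {poly R})) :
  (0 < N)%N ->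
  (forall n : nat, (n < N)%N -> x n < x n.+1) ->
  (forall i : 'I_N, xs i 0%N = x i /\ xs i k.+1 = x i.+1 /\
      forall j : nat, (j <= k)%N -> xs i j < xs i j.+1) ->
  assumptionS k x xs A ->
  (forall i : 'I_N, A i 0%N = 0) ->
  0 < beta -> 0 < tau ->
  (0 < s)%N ->
  (forall l : nat, (l < s)%N -> \sum_(kap < l.+1) c l kap = 1) ->
  (forall v, inVk k v -> inVk k (D v) /\
     forall w, inVk k w -> ipstar k xs A (D v) w = tau * Hstar k x xs A beta v w) ->
  exists (b : nat -> R) (bb : nat -> nat -> R),
    (forall kap kap0 : nat, bb kap kap0 = bb kap0 kap) /\
    forall v, inVk k v ->
      ipstar k xs A (Rstar c d s D v) (Rstar c d s D v)
      = ipstar k xs A v v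
        + \sum_(1 <= kap < s.+1) b kap * ipstar k xs A (iter kap D v) (iter kap D v)
        - tau * \sum_(kap < s) \sum_(kap0 < s)
                  bb kap kap0 * jumpip x (iter kap D v) (iter kap0 D v).
Proof.
move=> HN Hx Hxs HS HA0 Hb Ht Hs Hc HD.
pose al := fun n : nat => (rk_poly c d s)`_n.
have a0 : al 0%N = 1 by rewrite /al; exact: (@rk0 R c d s s (leqnn s) Hc).
exists (bcoef s al), (fun p q => beta * bbcoef s al p q); split.
  by move=> p q; rewrite /bbcoef addrC.
move=> v Hv.
have Hxs' : forall i : 'I_N, xs i 0%N = x i /\ xs i k.+1 = x i.+1.
  by move=> i; case: (Hxs i) => [H0 [H1 _]].
have Hu : forall n, inVk k (iter n D v) by elim => [|n IH] //=; case: (HD _ IH).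
rewrite /Rstar (ipstar_suml k xs A s.+1 al (fun kap => iter kap D v)).
under eq_bigr => kap _ do rewrite (ipstar_sumr k xs A s.+1 al (fun kap => iter kap D v)) mulr_sumr.
under eq_bigr => i _ do under eq_bigr => j _ do rewrite mulrA.
have fsym : forall a b, ipstar k xs A (iter a D v) (iter b D v) = ipstar k xs A (iter b D v) (iter a D v).
  by move=> a b; apply: ipstar_sym.
have Jsym : forall a b, jumpip x (iter a D v) (iter b D v) = jumpip x (iter b D v) (iter a D v).
  by move=> a b; apply: jumpip_sym.
have F2 : forall a b, ipstar k xs A (iter a.+1 D v) (iter b D v) + ipstar k xs A (iter a D v) (iter b.+1 D v)
   = - (tau * beta * jumpip x (iter a D v) (iter b D v)).
  move=> a b; rewrite (fsym a b.+1) !iterS.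
  rewrite ((HD _ (Hu a)).2 _ (Hu b)) ((HD _ (Hu b)).2 _ (Hu a)) -mulrDr.
  by rewrite (Hsym beta Hxs' HS (Hu a) (Hu b)) mulrN mulrA.
rewrite (@energy R s al (tau * beta) _ _ a0 fsym Jsym F2) /=.
congr (_ - _); rewrite -mulrA; congr (_ * _).
rewrite mulr_sumr; apply: eq_bigr => p _; rewrite mulr_sumr; apply: eq_bigr => q _.
by rewrite mulrA.
Qed.
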